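(* Let $(p_n)_{n\ge1}$ be the strictly increasing enumeration of all primes and let $S=\big\langle \frac{p_n+1}{p_n^2}: n\in\mathbb N\big\rangle\subseteq\mathbb Q_{\ge0}$. Then $\mathcal A(S)=\{\frac{p_n+1}{p_n^2}: n\in\mathbb N\}$, every element of $S$ is divisible in $S$ by only finitely many atoms, and $S$ is an FFM.
   Context: Monoids are commutative, cancellative, with identity, written additively; $a\mid_S b$ means $b-a\in S$. $\mathcal A(S)$ is the set of atoms. An FFM is a monoid in which every element is a finite sum of atoms and has only finitely many factorizations (up to order). *)

(* Defs.v *)
From mathcomp Require Import all_boot all_order all_algebra.
Set Implicit Arguments. Unset Strict Implicit. Unset Printing Implicit Defensive.
Import Order.TTheory GRing.Theory Num.Theory.
Local Open Scope ring_scope.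

Definition gen (p : nat) : rat := (p + 1)%N%:R / (p ^ 2)%N%:R.

Definition inS (x : rat) : Prop :=
  exists s : seq nat, all prime s /\ x = \sum_(p <- s) gen p.

Definition unitS (u : rat) : Prop := inS u /\ inS (- u).

Definition divS (a b : rat) : Prop := inS (b - a).

Definition atomS (a : rat) : Prop :=
  inS a /\ ~ unitS a /\
  forall b c, inS b -> inS c -> a = b + c -> unitS b \/ unitS c.

Definition factorization (x : rat) (f : seq rat) : Prop :=
  (forall a, a \in f -> atomS a) /\ x = \sum_(a <- f) a.

Definition FFM_S : Prop :=
  forall x, inS x ->
    (exists f, factorization x f) /\
    (exists L : seq (seq rat), forall f, factorization x f ->
        exists2 g, g \in L & perm_eq f g).

(* Main.v *)
Require Import Defs.
From mathcomp Require Import all_boot all_order all_algebra.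
From mathcomp Require Import ring lra zify.
Import Order.TTheory GRing.Theory Num.Theory.
Set Implicit Arguments. Unset Strict Implicit.
Local Open Scope ring_scope.

Definition Pr (s : seq nat) : nat := (\prod_(q <- s) (q ^ 2))%N.

Lemma gen_mul p : prime p -> gen p * (p ^ 2)%N%:R = (p + 1)%N%:R.
Proof.
move=> hp; rewrite /gen mulfVK // pnatr_eq0 expn_eq0 /=.
by case: p hp.
Qed.

Lemma gen_gt0 p : prime p -> 0 < gen p.
Proof.
move=> hp; rewrite /gen divr_gt0 // ltr0n ?addn1 //.
by rewrite expn_gt0 prime_gt0.
Qed.

Lemma gen_le1 p : prime p -> gen p <= 1.
Proof.
move=> hp; have h2 := prime_gt1 hp.
rewrite /gen ler_pdivrMr ?ltr0n ?expn_gt0 ?prime_gt0 // mul1r ler_nat.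
nia.
Qed.

Lemma sum_ge0 s : all prime s -> 0 <= \sum_(q <- s) gen q.
Proof.
elim: s => [|q s IH] /=; first by rewrite big_nil.
move/andP=> [hq hs]; rewrite big_cons addr_ge0 ?IH //.
exact: (ltW (gen_gt0 hq)).
Qed.

Lemma sum_gt0 s : all prime s -> s != [::] -> 0 < \sum_(q <- s) gen q.
Proof.
case: s => [|q s] //= /andP [hq hs] _; rewrite big_cons.
by rewrite ltr_wpDr ?sum_ge0 ?gen_gt0.
Qed.

Lemma sum_le_size s : all prime s -> \sum_(q <- s) gen q <= (size s)%:R.
Proof.
elim: s => [|q s IH] /=; first by rewrite big_nil.
move/andP=> [hq hs]; rewrite big_cons -addn1 natrD addrC.
by rewrite lerD ?IH ?gen_le1.
Qed.

Lemma sum_int s : all prime s ->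
  exists N : nat, (\sum_(q <- s) gen q) * (Pr s)%:R = N%:R.
Proof.
rewrite /Pr; elim: s => [|q s IH] /=.
  by exists 0%N; rewrite big_nil mul0r.
move/andP=> [hq /IH [N hN]].
exists ((q + 1) * (\prod_(j <- s) j ^ 2) + q ^ 2 * N)%N.
rewrite !big_cons natrD !natrM mulrDl -hN -(gen_mul hq).
rewrite !natrM; ring.
Qed.

Lemma notdvd_Pr p s : prime p -> all prime s -> p \notin s -> ~~ (p %| Pr s)%N.
Proof.
move=> hp; rewrite /Pr; elim: s => [|q s IH] /=.
  by rewrite big_nil dvdn1; case: p hp => [|[]].
move/andP=> [hq hs]; rewrite in_cons negb_or => /andP [hpq hps].
rewrite big_cons Euclid_dvdM // negb_or IH // andbT.
rewrite (Euclid_dvdX _ _ hp) negb_and; apply/orP; left.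
by rewrite dvdn_prime2.
Qed.

Lemma split_sum p u : \sum_(q <- u) gen q =
  (count_mem p u)%:R * gen p + \sum_(q <- filter (predC1 p) u) gen q.
Proof.
elim: u => [|q u IH] /=; first by rewrite !big_nil mul0r addr0.
rewrite big_cons IH; case: (eqVneq q p) => [->|hne] /=.
  by rewrite natrD mulrDl mul1r; ring.
by rewrite add0n big_cons; ring.
Qed.

Lemma core p u s0 : prime p -> all prime u -> all prime s0 -> p \notin s0 ->
  \sum_(q <- s0) gen q = \sum_(q <- u) gen q -> (p ^ 2 %| count_mem p u)%N.
Proof.
move=> hp hu hs0 hps0 heq.
have hu' : all prime (filter (predC1 p) u) by apply/allP => x; rewrite mem_filter => /andP [_ hx]; exact: (allP hu).
have hpu' : p \notin filter (predC1 p) u by rewrite mem_filter /= eqxx.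
have [N0 hN0] := sum_int hs0.
have [N1 hN1] := sum_int hu'.
set P0 := Pr s0 in hN0; set P1 := Pr (filter (predC1 p) u) in hN1.
set k := count_mem p u.
rewrite [X in _ = X](split_sum p) in heq.
have E : (N0 * (P1 * p ^ 2) = k * (p + 1) * (P0 * P1) + N1 * (P0 * p ^ 2))%N.
  apply/eqP; rewrite -(eqr_nat rat) natrD !natrM -hN0 -hN1 -(gen_mul hp) heq.
  apply/eqP; ring.
have h1 : (p ^ 2 %| k * (p + 1) * (P0 * P1))%N.
  have h2 : (p ^ 2 %| N1 * (P0 * p ^ 2))%N by rewrite mulnA dvdn_mull.
  by rewrite -(dvdn_addl _ h2) -E mulnA dvdn_mull.
move: h1; rewrite -mulnA mulnC Gauss_dvdr //.
apply: coprimeXl; rewrite !coprimeMr !prime_coprime // !notdvd_Pr // !andbT.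
by rewrite dvdn_addr ?dvdnn // dvdn1 neq_ltn (prime_gt1 hp) orbT.
Qed.

Lemma noatom p t : prime p -> all prime t -> (1 < size t)%N ->
  gen p <> \sum_(q <- t) gen q.
Proof.
move=> hp ht hsz heq.
case: (boolP (p \in t)) => hpt.
  move: heq; rewrite (perm_big _ (perm_to_rem hpt)) big_cons => h0'.
  have h0 : \sum_(q <- rem p t) gen q = 0.
    by apply: (@addrI _ (gen p)); rewrite addr0 -h0'.
  have : all prime (rem p t) by apply/allP => x /mem_rem hx; rewrite (allP ht).
  move=> hr; have : rem p t != [::].
    by rewrite -size_eq0 size_rem //; case: (size t) hsz => [|[]].
  move=> hne; by have := sum_gt0 hr hne; rewrite h0 ltxx.
have hpp : all prime [:: p] by rewrite /= hp.
have := @core p [:: p] t hp hpp ht hpt; rewrite big_seq1 => /(_ (esym heq)).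
rewrite /= eqxx dvdn1 => /eqP; have := prime_gt1 hp; nia.
Qed.

Lemma inS_ge0 x : inS x -> 0 <= x.
Proof. by move=> [s [hs ->]]; apply: sum_ge0. Qed.

Lemma unitS0 u : unitS u -> u = 0.
Proof. move=> [/inS_ge0 h1 /inS_ge0 h2]; lra. Qed.

Lemma inS0 : inS 0.
Proof. by exists [::]; rewrite big_nil. Qed.

Lemma inSD a b : inS a -> inS b -> inS (a + b).
Proof.
move=> [s1 [h1 ->]] [s2 [h2 ->]]; exists (s1 ++ s2).
by rewrite all_cat h1 h2 big_cat.
Qed.

Lemma atom_char a : atomS a <-> exists p : nat, prime p /\ a = gen p.
Proof.
split.
  move=> [[s [hs ->]] [hnu hat]].
  case: s hs hnu hat => [|q [|q' r]] /=.
  - by move=> _ hnu; exfalso; apply: hnu; rewrite big_nil; split; rewrite ?oppr0; apply: inS0.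
  - by rewrite andbT big_seq1 => hq; exists q.
  - move=> /andP [hq hr] _ hat; exfalso.
    have hb : inS (gen q) by exists [:: q]; split; [rewrite /= hq | rewrite big_seq1].
    have hc : inS (\sum_(j <- q' :: r) gen j) by exists (q' :: r).
    have [h|h] := hat _ _ hb hc (big_cons _ _ _ _ _ _).
    + by have := gen_gt0 hq; rewrite (unitS0 h) ltxx.
    + by have := @sum_gt0 (q' :: r) hr isT; rewrite (unitS0 h) ltxx.
move=> [p [hp ->]]; split; first by exists [:: p]; rewrite big_seq1 /= hp.
split.
  by move/unitS0 => h; have := gen_gt0 hp; rewrite h ltxx.
move=> b c [s1 [h1 ->]] [s2 [h2 ->]] heq.
case: s1 h1 heq => [|q1 s1] h1 heq.
  by left; rewrite big_nil; split; rewrite ?oppr0; apply: inS0.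
case: s2 h2 heq => [|q2 s2] h2 heq.
  by right; rewrite big_nil; split; rewrite ?oppr0; apply: inS0.
exfalso; apply: (noatom hp (t := (q1 :: s1) ++ (q2 :: s2))).
- by rewrite all_cat h1 h2.
- by rewrite size_cat /= addnS.
- by rewrite big_cat.
Qed.

Lemma key s0 p : all prime s0 -> prime p ->
  divS (gen p) (\sum_(q <- s0) gen q) -> p \in s0 \/ (p < size s0)%N.
Proof.
move=> hs0 hp [t [ht heq]].
case: (boolP (p \in s0)) => hps0; first by left.
right.
have heq' : \sum_(q <- s0) gen q = \sum_(q <- p :: t) gen q.
  by rewrite big_cons -heq; ring.
have hu : all prime (p :: t) by rewrite /= hp ht.
have := core hp hu hs0 hps0 heq'.
set k := count_mem p (p :: t).
have hk : (0 < k)%N by rewrite /k /= eqxx.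
move=> hdk; have hk2 : (p ^ 2 <= k)%N by apply: dvdn_leq.
have : (p + 1)%N%:R <= \sum_(q <- s0) gen q.
  rewrite heq' (split_sum p) -/k.
  have hf : all prime (filter (predC1 p) (p :: t)).
    by apply/allP => x; rewrite mem_filter => /andP [_ hx]; exact: (allP hu).
  apply: (@le_trans _ _ (k%:R * gen p)); last by rewrite lerDl sum_ge0.
  by rewrite -(gen_mul hp) mulrC ler_wpM2r ?(ltW (gen_gt0 hp)) // ler_nat.
have := sum_le_size hs0 => h1 h2.
have : ((p + 1)%N%:R <= (size s0)%:R :> rat) by apply: le_trans h2 h1.
rewrite ler_nat; lia.
Qed.

Lemma mem_le_sumn (p : nat) s : p \in s -> (p <= sumn s)%N.
Proof.
elim: s => [|q s IH] //=; rewrite inE => /orP [/eqP ->|h].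
  exact: leq_addr.
exact: leq_trans (IH h) (leq_addl _ _).
Qed.

Fixpoint seqs (L : seq rat) (n : nat) : seq (seq rat) :=
  if n is n'.+1 then [seq a :: g | a <- L, g <- seqs L n'] else [:: [::]].

Lemma mem_seqs L f : all (mem L) f -> f \in seqs L (size f).
Proof.
elim: f => [|a f IH] /=; first by rewrite inE.
move/andP=> [ha hf]; apply/allpairsP; exists (a, f); split => //.
exact: IH.
Qed.

Lemma size_bound (f : seq rat) (c : rat) : (forall a, a \in f -> 1 <= a * c) ->
  (size f)%:R <= (\sum_(a <- f) a) * c.
Proof.
elim: f => [|a f IH] h /=; first by rewrite big_nil mul0r.
rewrite big_cons mulrDl -addn1 natrD addrC lerD ?h ?inE ?eqxx //.
by apply: IH => x hx; apply: h; rewrite inE hx orbT.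
Qed.

Lemma atoms_sum f : (forall a, a \in f -> atomS a) -> inS (\sum_(a <- f) a).
Proof.
elim: f => [|a f IH] h; first by rewrite big_nil; apply: inS0.
rewrite big_cons; apply: inSD.
  by case: (h a (mem_head _ _)).
by apply: IH => x hx; apply: h; rewrite inE hx orbT.
Qed.

Theorem mainTheorem9 :
  (forall a : rat, atomS a <-> exists p : nat, prime p /\ a = gen p) /\
  (forall x : rat, inS x ->
     exists L : seq rat, forall a, atomS a -> divS a x -> a \in L) /\
  FFM_S.
Proof.
have part2 : forall s0, all prime s0 -> forall a, atomS a ->
    divS a (\sum_(q <- s0) gen q) ->
    exists p, [/\ prime p, a = gen p & p \in s0 ++ iota 0 (size s0)].
  move=> s0 hs0 a /atom_char [p [hp ->]] hd; exists p; split => //.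
  rewrite mem_cat mem_iota /=; have [h|h] := key hs0 hp hd.
    by rewrite h.
  by rewrite h orbT.
split; first exact: atom_char.
split.
  move=> x [s0 [hs0 ->]]; exists (map gen (s0 ++ iota 0 (size s0))).
  move=> a ha hd; have [p [hp -> hm]] := part2 s0 hs0 a ha hd.
  exact: map_f.
move=> x [s0 [hs0 hx]]; split.
  exists (map gen s0); split; last by rewrite big_map.
  move=> a /mapP [p hp ->]; apply/atom_char; exists p; split => //.
  exact: (allP hs0).
set L := map gen (s0 ++ iota 0 (size s0)).
set B := (size s0 + sumn s0)%N.
set N := (size s0 * B)%N.
exists (flatten [seq seqs L n | n <- iota 0 N.+1]).
move=> f [hf hsum]; exists f => //.
have hdiv : forall a, a \in f -> exists p, [/\ prime p, a = gen p & p \in s0 ++ iota 0 (size s0)].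
  move=> a ha; apply: part2 => //; first exact: hf.
  rewrite -hx /divS hsum (perm_big _ (perm_to_rem ha)) big_cons addrAC subrr add0r.
  apply: atoms_sum => y hy; apply: hf; exact: (mem_rem hy).
have hB : forall a, a \in f -> 1 <= a * B%:R.
  move=> a ha; have [p [hp -> hm]] := hdiv a ha.
  have hpB : (p <= B)%N.
    move: hm; rewrite mem_cat mem_iota /= /B => /orP [hm|hm].
      by apply: leq_trans (leq_addl _ _); apply: mem_le_sumn.
    lia.
  have hp1 := prime_gt1 hp.
  rewrite /gen mulrAC ler_pdivlMr ?ltr0n ?expn_gt0 ?prime_gt0 // mul1r -natrM ler_nat.
  nia.
have hsz : (size f <= N)%N.
  have := size_bound hB; rewrite -hsum hx => h.
  have := le_trans h (ler_wpM2r (ler0n _ _) (sum_le_size hs0)).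
  by rewrite -natrM ler_nat.
apply/flattenP; exists (seqs L (size f)).
  by apply: map_f; rewrite mem_iota /= add0n ltnS.
apply: mem_seqs; apply/allP => a ha; have [p [hp -> hm]] := hdiv a ha.
exact: map_f.
Qed.
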